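(* Let $n\ge2$ and let $G$ be an induced subgraph of $Q_n$ with exactly $2^{n-1}$ vertices such that for every direction $i\in[n]$, $G$ contains an edge in direction $i$. Then $\Delta(G)>\tfrac12\log_2 n-\tfrac12\log_2\log_2 n+\tfrac12$.
   Context: $Q_n$ is the $n$-dimensional hypercube graph on $\{0,1\}^n$; an edge $\{x,y\}$ of $Q_n$ is in direction $i$ if $x$ and $y$ differ exactly in coordinate $i$. $\Delta(G)$ is the maximum degree of $G$. *)

(* Defs.v *)
From mathcomp Require Import all_boot.
From Stdlib Require Import Reals.
Set Implicit Arguments. Unset Strict Implicit. Unset Printing Implicit Defensive.

Definition cube_vertex (n : nat) := {ffun 'I_n -> bool}.

Definition diff_coords n (x y : cube_vertex n) : {set 'I_n} :=
  [set i | x i != y i].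

Definition cube_adj n (x y : cube_vertex n) : bool :=
  #|diff_coords x y| == 1%N.

Definition cube_edge_dir n (i : 'I_n) (x y : cube_vertex n) : bool :=
  diff_coords x y == [set i].

Definition ind_deg n (S : {set cube_vertex n}) (x : cube_vertex n) : nat :=
  #|[set y in S | cube_adj x y]|.

Definition ind_maxdeg n (S : {set cube_vertex n}) : nat :=
  \max_(x in S) ind_deg S x.

Definition log2 (x : R) : R := (ln x / ln 2)%R.

(* Main.v *)
Require Import Defs.
From mathcomp Require Import all_boot.
From mathcomp Require Import zify.
Set Implicit Arguments. Unset Strict Implicit. Unset Printing Implicit Defensive.


Lemma ffact_ineq a b i : b <= a -> b ^_ i * a ^ i <= a ^_ i * b ^ i.
Proof.
move=> hba; elim: i => [|i IH]; first by rewrite !ffactn0 !expn0.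
rewrite !ffactnSr !expnS.
have h : (b - i) * a <= (a - i) * b by nia.
have := leq_mul IH h.
set X := b ^_ i; set Y := a ^ i; set Z := a ^_ i; set W := b ^ i.
set u := b - i; set v := a - i.
move=> H; apply: leq_trans (leq_trans _ H) _; apply/eqP => //; nia.
Qed.

Lemma binom_term a b i : i <= b -> b <= a ->
  'C(b, i) * a ^ a <= 'C(a, i) * (a ^ (a - i) * b ^ i).
Proof.
move=> hib hba.
rewrite -(leq_pmul2r (fact_gt0 i)).
have hia : i <= a by apply: leq_trans hib hba.
rewrite mulnAC bin_ffact [X in _ <= X]mulnAC bin_ffact.
have ha : a ^ a = a ^ (a - i) * a ^ i by rewrite -expnD subnK.
rewrite [a ^ a]ha.
have := ffact_ineq i hba.
set X := b ^_ i; set Y := a ^ i; set Z := a ^_ i; set W := b ^ i; set V := a ^ (a - i).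
move=> H; have := leq_mul H (leqnn V); nia.
Qed.

Lemma two_pow a b : b <= a -> 2 ^ b * a ^ a <= (a + b) ^ a.
Proof.
move=> hba.
rewrite -[2]/(1 + 1) expnDn expnDn big_distrl /=.
rewrite (big_ord_widen a.+1 (fun i => 'C(b, i) * (1 ^ (b - i) * 1 ^ i) * a ^ a)) //.
rewrite big_mkcond; apply: leq_sum => i _; case: ifP => // hi.
rewrite !exp1n !muln1; apply: binom_term => //.
Qed.

Lemma leq_expb m n e : m <= n -> m ^ e <= n ^ e.
Proof. by move=> h; elim: e => [|e IH] //; rewrite !expnS leq_mul. Qed.

Lemma key_ineq a b : b <= a -> a ^ a * b ^ b * 4 ^ b <= (a + b) ^ (a + b).
Proof.
move=> hba.
rewrite expnD.
have h1 := two_pow hba.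
have h2 : 2 ^ b * b ^ b <= (a + b) ^ b.
  rewrite -expnMn; apply: leq_expb; lia.
have := leq_mul h1 h2.
have -> : 4 ^ b = 2 ^ b * 2 ^ b by rewrite -expnMn.
set X := 2 ^ b; set Y := a ^ a; set Z := b ^ b; set U := (a + b) ^ a; set V := (a+b)^b.
nia.
Qed.

Lemma key_min a b : a ^ a * b ^ b * 4 ^ minn a b <= (a + b) ^ (a + b).
Proof.
case: (leqP b a) => h.
  exact: key_ineq.
rewrite addnC [a ^ a * _]mulnC; apply: key_ineq; exact: ltnW.
Qed.


Section Cube.
Variable n : nat.
Implicit Types (x y z w : cube_vertex n) (i j k : 'I_n) (U W : {set cube_vertex n}).

Definition flip j x : cube_vertex n := [ffun k => if k == j then ~~ x k else x k].

Lemma flipK j : involutive (flip j).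
Proof. move=> x; apply/ffunP=> k; rewrite !ffunE; case: eqP => // _; exact: negbK. Qed.

Lemma flipC i j x : flip i (flip j x) = flip j (flip i x).
Proof.
apply/ffunP=> k; rewrite !ffunE.
by case: (k == i); case: (k == j); case: (x k).
Qed.

Lemma diff_flip j x : diff_coords x (flip j x) = [set j].
Proof.
apply/setP=> k; rewrite !inE ffunE.
by case: (k =P j) => [->|_]; rewrite ?eqxx; case: (x _).
Qed.

Lemma adj_flip j x : cube_adj x (flip j x).
Proof. by rewrite /cube_adj diff_flip cards1. Qed.

Lemma diff_sym x y : diff_coords x y = diff_coords y x.
Proof. by apply/setP=> k; rewrite !inE eq_sym. Qed.

Lemma adj_sym x y : cube_adj x y = cube_adj y x.
Proof. by rewrite /cube_adj diff_sym. Qed.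

Lemma diff1 x y j : diff_coords x y = [set j] -> y = flip j x.
Proof.
move=> h; apply/ffunP=> k; rewrite ffunE.
move/setP: h => /(_ k); rewrite !inE.
case: (k == j) => /=.
  by case: (x k); case: (y k).
by move/negbFE/eqP.
Qed.

Lemma adjP x y : cube_adj x y -> exists j, y = flip j x.
Proof. by move=> /cards1P [j hj]; exists j; exact: diff1. Qed.

Lemma edge_dir i x y : cube_edge_dir i x y -> y = flip i x.
Proof. by move/eqP; exact: diff1. Qed.

Lemma adj_irr x : cube_adj x x = false.
Proof.
apply/negbTE; rewrite /cube_adj.
have -> : diff_coords x x = set0 by apply/setP=> k; rewrite !inE eqxx.
by rewrite cards0.
Qed.

Lemma flip_inj x : injective (fun j => flip j x).
Proof.
move=> i j /= /(congr1 (fun y => y i)); rewrite !ffunE eqxx.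
by case: (i =P j) => // _; case: (x i).
Qed.

Lemma adj_other w y j : cube_adj w y -> y j != w j -> y = flip j w.
Proof.
case/adjP=> k ->; rewrite ffunE.
by case: (j =P k) => [->|] //; rewrite eqxx.
Qed.

Lemma deg_dir U y : #|[set z in U | cube_adj y z]| = #|[set j | flip j y \in U]|.
Proof.
rewrite -(card_imset _ (@flip_inj y)); apply: eq_card => z.
rewrite [in LHS]inE; apply/andP/imsetP.
  by case=> hz /adjP [j ej]; exists j; rewrite ?inE -?ej.
by case=> j; rewrite inE => hj ->; rewrite hj adj_flip.
Qed.

Lemma sum_bool (T : finType) (A : {set T}) (P : pred T) :
  \sum_(z in A) (P z : nat) = #|[set z in A | P z]|.
Proof.
rewrite -big_mkcondr /= -sum1_card; apply: eq_bigl => z; by rewrite !inE.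
Qed.

Definition esum W := \sum_(w in W) \sum_(z in W) (cube_adj w z : nat).

Lemma cross_le1 W1 j c w : w j = c -> (forall z, z \in W1 -> z j != c) ->
  \sum_(z in W1) (cube_adj w z : nat) <= 1.
Proof.
move=> hw hW; rewrite sum_bool -(cards1 (flip j w)); apply: subset_leq_card.
apply/subsetP=> z; rewrite !inE => /andP [hz ha]; apply/eqP; apply: adj_other ha _.
by rewrite hw; apply: hW.
Qed.

Lemma iso W : 2 ^ esum W <= #|W| ^ #|W|.
Proof.
elim: {W}#|W|.+1 {-2}W (ltnSn #|W|) => // m IH W hW.
case: (boolP [exists w1 in W, exists w2 in W, w1 != w2]); last first.
  rewrite negb_exists => /forallP hall.
  have -> : esum W = 0.
    apply: big1 => w hw; apply: big1 => z hz.
    have := hall w; rewrite hw /= negb_exists => /forallP /(_ z).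
    by rewrite hz /= negbK => /eqP ->; rewrite adj_irr.
  by rewrite expn0 expn_gt0; case: #|W|.
case/existsP => w1 /andP [h1 /existsP [w2 /andP [h2 ne]]].
have [j hj] : exists j, w1 j != w2 j.
  apply/existsP; move: ne; apply: contraR; rewrite negb_exists => /forallP hj.
  by apply/eqP/ffunP => k; have := hj k; rewrite negbK => /eqP.
set B := [set w : cube_vertex n | w j == w1 j].
set W0 := W :&: B; set W1 := W :\: B.
have hcard : #|W0| + #|W1| = #|W| by rewrite cardsID.
have i0 : w1 \in W0 by rewrite !inE h1 eqxx.
have i1 : w2 \in W1 by rewrite !inE h2 andbT eq_sym.
have p0 : 0 < #|W0| by apply/card_gt0P; exists w1.
have p1 : 0 < #|W1| by apply/card_gt0P; exists w2.
have IH0 := IH W0 ltac:(lia).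
have IH1 := IH W1 ltac:(lia).
have split w : \sum_(z in W) (cube_adj w z : nat) =
   \sum_(z in W0) (cube_adj w z : nat) + \sum_(z in W1) (cube_adj w z : nat).
  by rewrite (big_setID B).
have hs : esum W = esum W0 + esum W1 +
   (\sum_(w in W0) \sum_(z in W1) (cube_adj w z : nat) +
    \sum_(w in W1) \sum_(z in W0) (cube_adj w z : nat)).
  rewrite /esum (eq_bigr _ (fun w _ => split w)) big_split /=.
  rewrite (big_setID B (fun w => \sum_(z in W0) _)) (big_setID B (fun w => \sum_(z in W1) _)) /=.
  rewrite -/W0 -/W1.
  move: (\sum_(i in W0) _) (\sum_(i in W1) \sum_(z in W0) _) (\sum_(i in W0) \sum_(z in W1) _) (\sum_(i in W1) \sum_(z in W1) _) => a b c d; lia.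
set X := \sum_(w in W0) _ in hs.
have hXY : \sum_(w in W1) \sum_(z in W0) (cube_adj w z : nat) = X.
  rewrite /X exchange_big /=; apply: eq_bigr => w _; apply: eq_bigr => z _.
  by rewrite adj_sym.
rewrite hXY in hs.
have hX0 : X <= #|W0|.
  rewrite -sum1_card; apply: leq_sum => w hw; apply: (@cross_le1 _ j (w1 j)).
    by move: hw; rewrite !inE => /andP [_ /eqP].
  by move=> z; rewrite !inE => /andP [].
have hX1 : X <= #|W1|.
  rewrite -hXY -sum1_card; apply: leq_sum => w hw; apply: (@cross_le1 _ j (~~ w1 j)).
    by move: hw; rewrite !inE => /andP [] /negbTE; case: (w j); case: (w1 j).
  by move=> z; rewrite !inE => /andP [_ /eqP ->]; case: (w1 j).
rewrite hs -hcard.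
apply: leq_trans (key_min #|W0| #|W1|).
rewrite !expnD; apply: leq_mul; first exact: leq_mul.
rewrite -expnMn; apply: leq_pexp2l => //.
by rewrite leq_min hX0 hX1.
Qed.

End Cube.


Lemma inv_card (T : finType) (f : T -> T) (U V : {set T}) :
  involutive f -> (forall x, x \in U -> f x \in V) -> (forall x, x \in V -> f x \in U) ->
  #|U| = #|V|.
Proof.
move=> fK hUV hVU; have fi := can_inj fK.
apply/eqP; rewrite eqn_leq; apply/andP; split.
  rewrite -(card_imset _ fi); apply: subset_leq_card; apply/subsetP=> y /imsetP [x hx ->].
  exact: hUV.
rewrite -(card_imset _ fi); apply: subset_leq_card; apply/subsetP=> y /imsetP [x hx ->].
exact: hVU.
Qed.

Section Main.
Variables (n d : nat) (S : {set cube_vertex n}).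
Hypothesis hbal : #|~: S| = #|S|.
Hypothesis hdeg : forall y, y \in S -> ind_deg S y <= d.

Lemma cross_bound i y : y \in S -> flip i y \in S ->
  n.+1 <= 2 * d + \sum_(z in [set z | (z \in S) == (flip i z \in S)] :\: S) (cube_adj y z : nat).
Proof.
move=> hy hfy; set D := [set z | _].
rewrite sum_bool deg_dir.
set N1 := [set j | flip j y \in S]; set N2 := [set j | flip j (flip i y) \in S].
have c1 : #|N1| <= d by rewrite /N1 -deg_dir; apply: hdeg.
have c2 : #|N2| <= d by rewrite /N2 -deg_dir; apply: hdeg.
have c12 : 0 < #|N1 :&: N2|.
  by apply/card_gt0P; exists i; rewrite !inE hfy flipK hy.
have cU := cardsU N1 N2.
have cC := cardsC (N1 :|: N2); rewrite card_ord in cC.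
have sub : ~: (N1 :|: N2) \subset [set j | flip j y \in D :\: S].
  apply/subsetP=> j; rewrite !inE negb_or => /andP [h1 h2].
  by rewrite flipC (negbTE h1) (negbTE h2).
have := subset_leq_card sub.
have c3 : #|N1 :&: N2| <= #|N1| by apply: subset_leq_card; apply: subsetIl.
lia.
Qed.

Lemma dir_bound i : (exists x, x \in S /\ flip i x \in S) ->
  2 ^ n.+2 <= 2 * #|[set y in S | flip i y \in S]| * 4 ^ d.
Proof.
case=> x0 [hx0 hfx0].
set D := [set z | (z \in S) == (flip i z \in S)].
set DS := D :&: S; set DT := D :\: S.
have eDS : DS = [set y in S | flip i y \in S].
  apply/setP=> y; rewrite !inE; by case: (y \in S); case: (flip i y \in S).
rewrite -eDS.
have hDD : forall y, (y \in D) = (flip i y \in D).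
  by move=> y; rewrite !inE flipK eq_sym.
have bal : #|DS| = #|DT|.
  have e1 := cardsID D S; have e2 := cardsID D (~: S).
  have e3 : #|S :\: D| = #|~: S :\: D|.
    apply: (@inv_card _ (flip i)); first exact: flipK.
      move=> y; rewrite !inE => /andP [hD hS]; move: hD.
      by rewrite flipK hS; case: (flip i y \in S).
    move=> y; rewrite !inE => /andP [hD hS]; move: hD.
    by rewrite flipK (negbTE hS); case: (flip i y \in S).
  have e4 : #|DT| = #|~: S :&: D| by rewrite /DT setDE setIC.
  have e5 : #|DS| = #|S :&: D| by rewrite /DS setIC.
  lia.
have cD : #|D| = #|DS| + #|DT| by rewrite cardsID.
set k := #|DS|.
have kpos : 0 < k.
  by apply/card_gt0P; exists x0; rewrite !inE hx0 hfx0 eqxx.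
have split w : \sum_(z in D) (cube_adj w z : nat) =
   \sum_(z in DS) (cube_adj w z : nat) + \sum_(z in DT) (cube_adj w z : nat).
  by rewrite (big_setID S).
have hs : esum D = esum DS + esum DT +
   (\sum_(w in DS) \sum_(z in DT) (cube_adj w z : nat) +
    \sum_(w in DT) \sum_(z in DS) (cube_adj w z : nat)).
  rewrite /esum (eq_bigr _ (fun w _ => split w)) big_split /=.
  rewrite (big_setID S (fun w => \sum_(z in DS) _)) (big_setID S (fun w => \sum_(z in DT) _)) /=.
  rewrite -/DS -/DT.
  move: (\sum_(i in DS) _) (\sum_(i in DT) \sum_(z in DS) _) (\sum_(i in DS) \sum_(z in DT) _) (\sum_(i in DT) \sum_(z in DT) _) => a b c e; lia.
set X := \sum_(w in DS) _ in hs.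
have hXY : \sum_(w in DT) \sum_(z in DS) (cube_adj w z : nat) = X.
  rewrite /X exchange_big /=; apply: eq_bigr => w _; apply: eq_bigr => z _.
  by rewrite adj_sym.
rewrite hXY in hs.
have eS : k <= esum DS.
  rewrite /k -sum1_card; apply: leq_sum => w hw; rewrite sum_bool.
  apply/card_gt0P; exists (flip i w); rewrite !inE adj_flip andbT.
  move: hw; rewrite !inE => /andP [hD hS]; move: hD.
  by rewrite hS flipK => /eqP <-; rewrite hS eqxx.
have eT : #|DT| <= esum DT.
  rewrite -sum1_card; apply: leq_sum => w hw; rewrite sum_bool.
  apply/card_gt0P; exists (flip i w); rewrite !inE adj_flip andbT.
  move: hw; rewrite !inE => /andP [hS hD]; move: hD.
  by rewrite (negbTE hS) flipK => /eqP <-.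
have eX : k * n.+1 <= 2 * d * k + X.
  rewrite /k -sum_nat_const mulnC -sum_nat_const /X -big_split /=.
  apply: leq_sum => w; rewrite !inE => /andP [hD hS]; move: hD; rewrite hS => /eqP hF.
  by apply: cross_bound => //; rewrite -hF.
have iD := iso D.
rewrite hs cD -bal in iD.
have h1 : 2 ^ (n.+2 * (k + k)) <= 2 ^ (esum DS + esum DT + (X + X) + 4 * d * k).
  rewrite leq_exp2l //; rewrite -bal in eT; lia.
have h2 : 2 ^ (esum DS + esum DT + (X + X) + 4 * d * k) <= (k + k) ^ (k + k) * (4 ^ d) ^ (k + k).
  rewrite expnD; apply: leq_mul => //.
  rewrite -expnM; have -> : 4 = 2 ^ 2 by []. rewrite -expnM leq_exp2l //; lia.
have h3 := leq_trans h1 h2.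
rewrite expnM -expnMn leq_exp2r in h3; last by lia.
by rewrite mul2n -addnn.
Qed.

Lemma sum_bool_all (T : finType) (P : pred T) :
  \sum_i (P i : nat) = #|[set i | P i]|.
Proof.
have := sum_bool [set: T] P; rewrite (eq_bigl (fun i => true)) => [->|i]; last by rewrite inE.
by apply: eq_card => i; rewrite !inE.
Qed.

Lemma total_bound : (forall i, exists x, x \in S /\ flip i x \in S) ->
  n * 2 ^ n.+2 <= 2 * 4 ^ d * (d * #|S|).
Proof.
move=> hall.
have : \sum_(i < n) 2 ^ n.+2 <= \sum_(i < n) 2 * #|[set y in S | flip i y \in S]| * 4 ^ d.
  by apply: leq_sum => i _; exact: dir_bound.
rewrite sum_nat_const card_ord.
move/leq_trans; apply.
rewrite (eq_bigr (fun i => #|[set y in S | flip i y \in S]| * (2 * 4 ^ d))); last first.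
  by move=> i _; rewrite mulnAC mulnC.
rewrite -big_distrl /= mulnC leq_mul2l; apply/orP; right.
rewrite (eq_bigr (fun i => \sum_(y in S) (flip i y \in S : nat))); last first.
  by move=> i _; rewrite sum_bool.
rewrite exchange_big /= -[d * _]mulnC -sum_nat_const; apply: leq_sum => y hy.
rewrite sum_bool_all -deg_dir; exact: hdeg.
Qed.

End Main.


Lemma nat_final n (S : {set cube_vertex n}) :
  2 <= n ->
  #|S| = Nat.pow 2 n.-1 ->
  (forall i : 'I_n, exists x y, [/\ x \in S, y \in S & cube_edge_dir i x y]) ->
  4 * n <= 4 ^ ind_maxdeg S * ind_maxdeg S.
Proof.
move=> hn hS hE.
have ep : forall a b, Nat.pow a b = a ^ b.
  by move=> a b; elim: b => [|b IH] //=; rewrite expnS IH.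
rewrite ep in hS.
have hT : #|{: cube_vertex n}| = 2 ^ n by rewrite card_ffun card_bool card_ord.
have h2 : 2 ^ n = 2 * 2 ^ n.-1 by rewrite -expnS prednK //; lia.
have hbal : #|~: S| = #|S|.
  have := cardsC S; rewrite hT hS h2; lia.
set d := ind_maxdeg S.
have hdeg : forall y, y \in S -> ind_deg S y <= d.
  by move=> y hy; apply: (@leq_bigmax_cond _ (fun x => x \in S) (ind_deg S) y).
have hall : forall i, exists x, x \in S /\ flip i x \in S.
  move=> i; case: (hE i) => x [y [hx hy he]]; exists x; split => //.
  by rewrite -(edge_dir he).
have := total_bound hbal hdeg hall.
rewrite hS expnS expnS.
set P := 2 ^ n.-1; set Q := 4 ^ d.
have Pp : 0 < P by rewrite expn_gt0.
move=> H.
have : (4 * n) * (2 * P) <= (Q * d) * (2 * P).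
  move: H; rewrite h2 -/P; nia.
by rewrite leq_pmul2r // muln_gt0.
Qed.

From Stdlib Require Import Reals Lra.

Lemma expn_pow a b : expn a b = Nat.pow a b.
Proof. elim: b => [|b IH] //; rewrite expnS IH. by []. Qed.

Lemma ln_le' x y : (0 < x)%R -> (x <= y)%R -> (ln x <= ln y)%R.
Proof.
move=> h0 /Rle_lt_or_eq_dec [h|->]; last by apply: Rle_refl.
by apply: Rlt_le; apply: ln_increasing.
Qed.

Lemma real_final (n d : nat) : (2 <= n)%N -> (4 * n <= expn 4 d * d)%N ->
  (INR d > / 2 * log2 (INR n) - / 2 * log2 (log2 (INR n)) + / 2)%R.
Proof.
move=> hn hb.
case: d hb => [|d'] hb; first by rewrite muln0 in hb; case: n hn hb.
have hb' : (n <= Nat.pow 4 d' * d'.+1)%coq_nat.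
  apply/leP; rewrite -expn_pow; rewrite expnS -mulnA leq_pmul2l // in hb.
have Hn : (2 <= INR n)%R by apply: (le_INR 2); apply/leP.
have Hb : (INR n <= 4 ^ d' * (INR d' + 1))%R.
  have e4 : (4 = INR 4)%R by simpl; lra.
  by rewrite e4 -S_INR -pow_INR -mult_INR; apply: le_INR.
have a0 : (0 < ln 2)%R by rewrite -ln_1; apply: ln_increasing; lra.
have eL : (log2 (INR n) * ln 2 = ln (INR n))%R by rewrite /log2 ; field; lra.
set L := log2 (INR n) in eL *.
clearbody L.
have L1 : (1 <= L)%R.
  have : (ln 2 <= ln (INR n))%R by apply: ln_le'; lra.
  rewrite -eL => h; apply: (Rmult_le_reg_r (ln 2)); lra.
have elL : (log2 L * ln 2 = ln L)%R by rewrite /log2 ; field; lra.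
set lL := log2 L in elL *.
have lL0 : (0 <= lL)%R.
  have : (0 <= ln L)%R by rewrite -ln_1; apply: ln_le'; lra.
  rewrite -elL => h; apply: (Rmult_le_reg_r (ln 2)); lra.
rewrite S_INR.
have p4 : (0 < 4 ^ d')%R by apply: pow_lt; lra.
case: (Rle_lt_dec (2 * L) (INR d' + 1)) => hc.
  lra.
have h1 : (INR n < 4 ^ d' * 2 * L)%R by nra.
have h2 : (ln (INR n) < ln (4 ^ d' * 2 * L))%R by apply: ln_increasing; lra.
rewrite ln_mult ?ln_mult ?ln_pow in h2; try lra; try nra.
have e4 : (ln 4 = 2 * ln 2)%R.
  rewrite (_ : 4 = 2 * 2)%R; last by lra.
  rewrite ln_mult; lra.
rewrite e4 -eL -elL in h2.
have : ((L - lL) * ln 2 < (2 * INR d' + 1) * ln 2)%R by nra.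
move/Rmult_lt_reg_r => /(_ a0) h3.
lra.
Qed.


Theorem lemma3p5 (n : nat) (S : {set cube_vertex n}) :
  (2 <= n)%N ->
  #|S| = (2 ^ n.-1)%N ->
  (forall i : 'I_n, exists x y, [/\ x \in S, y \in S & cube_edge_dir i x y]) ->
  (INR (ind_maxdeg S) >
     / 2 * log2 (INR n) - / 2 * log2 (log2 (INR n)) + / 2)%R.
Proof.
move=> hn hS hE.
apply: real_final => //.
exact: nat_final.
Qed.
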